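(* Let $\mathcal{A}$ be a separating union-closed family with base set $[n]$ and height $h=4$, and let $\mathcal{B}=\{B_1,B_2,B_3,B_4\}$ be a choice of $\mathcal{B}(\mathcal{A})$ with $|\mathcal{B}|=4$. Then: (i) if $n$ is even, then $\sum_{i=1}^4 |B_i| = 2n-4$ and $|B_i|=\frac{n-2}{2}$ for all $i \in \{1,2,3,4\}$; (ii) if $n$ is odd, then $2n-4 \leq \sum_{i=1}^4 |B_i| \leq 2n-2$ and $|B_i| \geq \frac{n-5}{2}$ for all $i \in \{1,2,3,4\}$; moreover, if there exists $i \in \{1,2,3,4\}$ with $|B_i|=\frac{n-5}{2}$, then $|B_j|=\frac{n-1}{2}$ for all $j \in \{1,2,3,4\} \setminus \{i\}$.
   Context: A family of sets $\mathcal{A}$ is union-closed if it is a finite family of distinct finite sets with at least one nonempty member set, and $X,Y\in\mathcal{A}$ implies $X\cup Y\in\mathcal{A}$ (the empty set may be a member). For a family $\mathcal{F}$, $b(\mathcal{F})=\bigcup_{F\in\mathcal{F}}F$; the base set $b(\mathcal{A})$ is denoted $[n]=\{1,\dots,n\}$. $\mathcal{A}$ is separating if for any two distinct $x,y\in[n]$ there is $A\in\mathcal{A}$ containing exactly one of $x,y$. A chain in $\mathcal{A}$ is a subfamily any two distinct members of which are comparable under proper inclusion; the height $h$ of $\mathcal{A}$ is the maximum size of a chain in $\mathcal{A}$. For real $x\ge 0$, $\mathcal{A}_{<x}=\{A\in\mathcal{A} : |A|<x\}$. For $\mathcal{S}\subseteq\mathcal{A}$ and $S\in\mathcal{S}$,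 $\mathrm{irr}_{\mathcal{S}}(S)=\{s\in S : s\notin b(\mathcal{S}\setminus\{S\})\}$, and $\mathcal{S}$ is irredundant if $\mathrm{irr}_{\mathcal{S}}(S)\neq\emptyset$ for every $S\in\mathcal{S}$. With $B=b(\mathcal{A}_{<n/2})$, $\mathcal{B}(\mathcal{A})$ denotes any irredundant subfamily of $\mathcal{A}_{<n/2}$ of minimum size such that $b(\mathcal{B}(\mathcal{A}))=B$. *)

(* Defs.v *)
(* Families of subsets of the base set [n], modelled as
   {set {set 'I_n}} (elements 0..n-1 stand for 1..n). *)
From mathcomp Require Import all_boot all_order.
Set Implicit Arguments. Unset Strict Implicit. Unset Printing Implicit Defensive.

Section Fam.
Variable n : nat.
Notation fam := {set {set 'I_n}}.

Definition bfam (F : fam) : {set 'I_n} := \bigcup_(X in F) X.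

(* union-closed: finite family of distinct finite sets (automatic), at least
   one nonempty member, closed under pairwise unions *)
Definition union_closed (A : fam) : Prop :=
  (exists2 X, X \in A & X != set0) /\
  (forall X Y, X \in A -> Y \in A -> X :|: Y \in A).

Definition separating (A : fam) : Prop :=
  forall x y : 'I_n, x != y -> exists2 X, X \in A & (x \in X) != (y \in X).

Definition is_chain (C : fam) : Prop :=
  forall X Y, X \in C -> Y \in C -> X != Y -> (X \proper Y) || (Y \proper X).

Definition has_height (A : fam) (h : nat) : Prop :=
  (exists2 C : fam, C \subset A /\ is_chain C & #|C| = h) /\
  (forall C : fam, C \subset A -> is_chain C -> #|C| <= h).

Definition fam_lt_half (A : fam) : fam := [set X in A | 2 * #|X| < n].

Definition irr (S : fam) (X : {set 'I_n}) : {set 'I_n} := X :\: bfam (S :\ X).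

Definition irredundant (S : fam) : Prop := forall X, X \in S -> irr S X != set0.

Definition is_BA (A S : fam) : Prop :=
  [/\ S \subset fam_lt_half A, irredundant S,
      bfam S = bfam (fam_lt_half A) &
      forall S' : fam, S' \subset fam_lt_half A -> irredundant S' ->
        bfam S' = bfam (fam_lt_half A) -> #|S| <= #|S'| ].
End Fam.

(* Main.v *)
Require Import Defs.
From mathcomp Require Import all_boot all_order.
From mathcomp Require Import zify.
Set Implicit Arguments. Unset Strict Implicit. Unset Printing Implicit Defensive.

Section Aux.
Variable n : nat.
Notation fam := {set {set 'I_n}}.
Implicit Types (S T : fam).

Definition supr (X Y : {set 'I_n}) := Y \proper X.

Lemma supr_tr : transitive supr.
Proof. by move=> y x z h1 h2; exact: proper_trans h2 h1. Qed.

Lemma chain_seq (s : seq {set 'I_n}) : sorted supr s ->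
  is_chain [set:: s] /\ #|[set:: s]| = size s.
Proof.
move=> hs.
have hu : uniq s := sorted_uniq supr_tr (fun X => properxx X) hs.
split; last by rewrite cardsE; apply/card_uniqP.
move=> X Y; rewrite !inE => hX hY hXY.
have H := sorted_ltn_nth supr_tr set0 hs.
have iX : index X s < size s by rewrite index_mem.
have iY : index Y s < size s by rewrite index_mem.
case: (ltngtP (index X s) (index Y s)) => h.
- by have := H _ _ iX iY h; rewrite /supr !nth_index // => ->; rewrite orbT.
- by have := H _ _ iY iX h; rewrite /supr !nth_index // => ->.
- by move: hXY; rewrite -(nth_index set0 hX) -(nth_index set0 hY) h eqxx.
Qed.

Lemma dc (Bf : fam) (f : {set 'I_n} -> {set 'I_n}) :
  \sum_(X in Bf) #|f X| = \sum_x \sum_(X in Bf) ((x \in f X) : nat).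
Proof.
rewrite [RHS]exchange_big /=; apply: eq_bigr => X _.
rewrite -sum1_card big_mkcond /=; apply: eq_bigr => x _.
by case: (x \in f X).
Qed.

Lemma sum_bound (T : fam) c : (forall Y, Y \in T -> 2 * #|Y| + c <= n) ->
  2 * (\sum_(Y in T) #|Y|) + c * #|T| <= #|T| * n.
Proof.
move=> h.
have -> : 2 * (\sum_(Y in T) #|Y|) + c * #|T| = \sum_(Y in T) (2 * #|Y| + c).
  rewrite big_split /= -big_distrr /= -sum1_card big_distrr /=.
  by rewrite big_distrr /=; congr (_ + _); apply: eq_bigr => i _; rewrite muln1.
rewrite -sum1_card big_distrl /= mul1n.
by apply: leq_sum.
Qed.

Section UC.
Variable A : fam.
Hypothesis hU : forall X Y, X \in A -> Y \in A -> X :|: Y \in A.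

Lemma bfam_in S : S \subset A -> (bfam S == set0) || (bfam S \in A).
Proof.
move=> sub; rewrite /bfam.
apply: (big_ind (fun X => (X == set0) || (X \in A))) => //.
- by rewrite eqxx.
- move=> X Y /orP[/eqP->|hX] /orP[/eqP->|hY]; rewrite ?set0U ?setU0 ?eqxx ?hX ?hY ?orbT //.
  by rewrite hU ?orbT.
- by move=> X hX; rewrite (subsetP sub X hX) orbT.
Qed.

Lemma irr_sub S X : irredundant S -> irredundant (S :\ X).
Proof.
move=> h Y; rewrite !inE => /andP[hYX hY].
have [x] := set0Pn _ (h Y hY); rewrite /irr !inE => /andP[xn xY].
apply/set0Pn; exists x; rewrite /irr !inE xY andbT.
apply: contra xn => /bigcupP[Z]; rewrite !inE => /andP[hZY /andP[_ hZ]] xZ.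
by apply/bigcupP; exists Z => //; rewrite !inE hZY.
Qed.

Lemma chainA k : forall S, S \subset A -> irredundant S -> #|S| = k.+1 ->
  exists s, [/\ sorted supr (bfam S :: s), size s = k & all (mem A) (bfam S :: s)].
Proof.
elim: k => [|k IH] S sub hirr hc.
- have [X eS] := cards1P (introT eqP hc); rewrite eS in sub *; exists [::]; split => //=.
  by rewrite andbT /bfam big_set1; apply: (subsetP sub); rewrite inE.
- have [X hX] : exists X, X \in S.
    by apply/set0Pn; rewrite -card_gt0 hc.
  have hc' : #|S :\ X| = k.+1 by move: hc; rewrite (cardsD1 X) hX add1n => -[].
  have sub' : S :\ X \subset A by apply: subset_trans (subsetDl _ _) sub.
  have [s [h1 h2 h3]] := IH _ sub' (@irr_sub _ X hirr) hc'.
  have [x] := set0Pn _ (hirr X hX); rewrite /irr !inE => /andP[xn xX].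
  have bX : x \in bfam S by apply/bigcupP; exists X.
  have pr : bfam (S :\ X) \proper bfam S.
    apply/properP; split; last by exists x.
    apply/subsetP => y /bigcupP[Z]; rewrite !inE => /andP[_ hZ] yZ.
    by apply/bigcupP; exists Z.
  have inA : bfam S \in A.
    have := bfam_in sub; case/orP => // /eqP e; by move: bX; rewrite e inE.
  exists (bfam (S :\ X) :: s); split => //=; first by apply/andP; split.
  - by rewrite h2.
  - by rewrite inA.
Qed.
End UC.
End Aux.

Lemma splitX n (T : {set {set 'I_n}}) X : X \in T ->
  \sum_(Y in T) #|Y| = #|X| + \sum_(Y in T :\ X) #|Y|.
Proof.
move=> hX; rewrite (bigD1 X hX) /=; congr (_ + _).
by apply: eq_bigl => Y; rewrite !inE andbC.
Qed.

Lemma even_step n a : ~~ odd n -> 2 * a < n -> 2 * a + 2 <= n.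
Proof.
move=> he h; have := odd_double_half n; rewrite (negbTE he) add0n -muln2.
move: (n./2) => k e; rewrite -e in h *; lia.
Qed.

Lemma ar1 r s : 1 < true + (true + r) + s.
Proof. by rewrite /= add1n addSn ltnS addSn. Qed.
Lemma ar2 r s : 1 < true + r + (true + s).
Proof. by rewrite /= add1n addSn ltnS addnS. Qed.

Lemma arE1 n S : 2*n <= S+4 -> 2*S + 2*4 <= 4*n -> S+4 = 2*n.
Proof. lia. Qed.
Lemma arE2 n S x R : S = x+R -> 2*R + 2*3 <= 3*n -> 2*x+2 <= n -> 2*n <= S+4 -> 2*x+2 = n.
Proof. lia. Qed.
Lemma arO1 n S x R : S = x+R -> 2*R + 1*3 <= 3*n -> 2*n <= S+4 -> n <= 2*x+5.
Proof. lia. Qed.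
Lemma arO2 n S : 2*S + 1*4 <= 4*n -> S+2 <= 2*n.
Proof. lia. Qed.
Lemma arO3 n S x R y R2 : S = x+R -> R = y+R2 -> 2*R2 + 1*2 <= 2*n -> 2*x+5 = n ->
  2*y+1 <= n -> 2*n <= S+4 -> 2*y+1 = n.
Proof. lia. Qed.

Theorem propositionL (n : nat) (A Bf : {set {set 'I_n}}) :
  union_closed A -> bfam A = [set: 'I_n] -> separating A ->
  has_height A 4 -> is_BA A Bf -> #|Bf| = 4 ->
  (~~ odd n ->
     (\sum_(X in Bf) #|X|) + 4 = 2 * n /\
     (forall X, X \in Bf -> 2 * #|X| + 2 = n)) /\
  (odd n ->
     [/\ 2 * n <= (\sum_(X in Bf) #|X|) + 4,
         (\sum_(X in Bf) #|X|) + 2 <= 2 * n,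
         (forall X, X \in Bf -> n <= 2 * #|X| + 5) &
         (forall X, X \in Bf -> 2 * #|X| + 5 = n ->
            forall Y, Y \in Bf -> Y != X -> 2 * #|Y| + 1 = n)]).
Proof.
move=> [[X0 hX0 nX0] hU] hbA hsep [_ hH] [hsub hirr hbB _] hc.
have BA : Bf \subset A.
  apply: subset_trans hsub _; apply/subsetP => X; rewrite inE => /andP[].
  by [].
have hlt : forall X, X \in Bf -> 2 * #|X| + 1 <= n.
  by move=> X /(subsetP hsub); rewrite inE addn1 => /andP[_ ->].
have no5 : forall s, sorted (@supr n) s -> all (mem A) s -> size s <= 4.
  move=> s hs ha; have [hc1 hc2] := chain_seq hs; rewrite -hc2.
  apply: hH => //; apply/subsetP => X; rewrite inE => hX; exact: (allP ha).
have TA : [set: 'I_n] \in A.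
  have := bfam_in hU (subxx A); rewrite hbA; case/orP => // /eqP e.
  have : X0 \subset [set: 'I_n] by apply: subsetT.
  by rewrite e subset0 (negbTE nX0).
have hcov : bfam Bf = [set: 'I_n].
  have [s [h1 h2 h3]] := @chainA n A hU 3 Bf BA hirr hc.
  apply/eqP; apply: contraT => hne.
  have H5 : size [:: [set: 'I_n], bfam Bf & s] <= 4.
    apply: no5; last by rewrite /= TA.
    by rewrite /= {1}/supr properT hne.
  by rewrite /= h2 in H5.
have hirr1 : forall X, X \in Bf -> forall x y, x \in irr Bf X -> y \in irr Bf X -> x = y.
  move=> X hX x y hx hy; apply/eqP; apply: contraT => nxy.
  have [Z hZ hxy] := hsep x y nxy.
  have sub3 : Bf :\ X \subset A by apply: subset_trans (subsetDl _ _) BA.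
  have hc3 : #|Bf :\ X| = 3 by move: hc; rewrite (cardsD1 X) hX add1n => -[].
  have [s [h1 h2 h3]] := @chainA n A hU 2 _ sub3 (@irr_sub n _ X hirr) hc3.
  set W := bfam (Bf :\ X) in h1 h2 h3.
  have xW : x \notin W by move: hx; rewrite /irr inE => /andP[].
  have yW : y \notin W by move: hy; rewrite /irr inE => /andP[].
  have WA : W \in A by move: h3 => /= /andP[].
  have [u [v [uZ vZ uW vW]]] : exists u v, [/\ u \in Z, v \notin Z, u \notin W & v \notin W].
    move: hxy; case xZ: (x \in Z); case yZ: (y \in Z) => // _;
      [exists x, y | exists y, x]; by rewrite ?xZ ?yZ ?xW ?yW.
  have p1 : (W :|: Z) \proper [set: 'I_n].
    rewrite properT; apply/eqP => e.
    have : v \in W :|: Z by rewrite e inE.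
    by rewrite inE (negbTE vW) (negbTE vZ).
  have p2 : W \proper W :|: Z.
    apply/properP; split; first exact: subsetUl.
    by exists u; rewrite ?inE ?uZ ?orbT.
  have H5 : size [:: [set: 'I_n], W :|: Z, W & s] <= 4.
    apply: no5.
      by rewrite /= {1}/supr p1 {1}/supr p2.
    by rewrite /= TA hU //.
  by rewrite /= h2 in H5.
have key : forall x, 2 <= \sum_(X in Bf) ((x \in X) : nat) + \sum_(X in Bf) ((x \in irr Bf X) : nat).
  move=> x; have : x \in bfam Bf by rewrite hcov inE.
  case/bigcupP => X hX xX.
  rewrite (bigD1 X hX) [X in _ + X](bigD1 X hX) /= xX.
  case xW: (x \in bfam (Bf :\ X)).
  - case/bigcupP: xW => Y; rewrite !inE => /andP[hYX hY] xY.
    rewrite (bigD1 Y); last by apply/andP; split; [exact: hY | exact: hYX].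
    rewrite /=.
    by rewrite xY; exact: ar1.
  - have -> : x \in irr Bf X by rewrite /irr inE xW xX.
    exact: ar2.
have cnt : 2 * n <= \sum_(X in Bf) #|X| + 4.
  have e1 : \sum_(X in Bf) #|X| = \sum_x \sum_(X in Bf) ((x \in X) : nat) := dc Bf id.
  have e2 := dc Bf (irr Bf).
  have i4 : \sum_(X in Bf) #|irr Bf X| <= 4.
    rewrite -hc -sum1_card; apply: leq_sum => X hX.
    apply/card_le1P => x hx y; apply/idP/eqP => [hy|->//].
    exact: hirr1 X hX y x hy hx.
  have : \sum_(x : 'I_n) 2 <= \sum_(x : 'I_n) (\sum_(X in Bf) ((x \in X) : nat) + \sum_(X in Bf) ((x \in irr Bf X) : nat)).
    by apply: leq_sum => x _; exact: key x.
  rewrite big_split /= -e1 -e2 sum_nat_const card_ord.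
  by rewrite mulnC => h; apply: leq_trans h _; rewrite leq_add2l.
have bnd := sum_bound hlt.
rewrite hc in bnd.
split.
- move=> hev.
  have hlt2 : forall X, X \in Bf -> 2 * #|X| + 2 <= n.
    by move=> X hX; apply: even_step => //; have := hlt X hX; rewrite addn1.
  have bnd2 := sum_bound hlt2; rewrite hc in bnd2.
  split; first exact: arE1 cnt bnd2.
  move=> X hX; have e := splitX hX.
  have hc3 : #|Bf :\ X| = 3 by move: hc; rewrite (cardsD1 X) hX add1n => -[].
  have b3 := sum_bound (T := Bf :\ X) (c := 2) (fun Y hY => hlt2 Y (subsetP (subsetDl _ _) Y hY)).
  rewrite hc3 in b3; exact: arE2 e b3 (hlt2 X hX) cnt.
- move=> hodd.
  have P3 : forall X, X \in Bf -> n <= 2 * #|X| + 5.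
    move=> X hX; have e := splitX hX.
    have hc3 : #|Bf :\ X| = 3 by move: hc; rewrite (cardsD1 X) hX add1n => -[].
    have b3 := sum_bound (T := Bf :\ X) (c := 1) (fun Y hY => hlt Y (subsetP (subsetDl _ _) Y hY)).
    rewrite hc3 in b3; exact: arO1 e b3 cnt.
  split => //; first exact: arO2 bnd.
  move=> X hX eX Y hY hYX.
  have e := splitX hX.
  have hY' : Y \in Bf :\ X by rewrite !inE hYX hY.
  have e' := splitX hY'.
  have hc3 : #|Bf :\ X| = 3 by move: hc; rewrite (cardsD1 X) hX add1n => -[].
  have hc2 : #|Bf :\ X :\ Y| = 2 by move: hc3; rewrite (cardsD1 Y) hY' add1n => -[].
  have b2 := sum_bound (T := Bf :\ X :\ Y) (c := 1)
    (fun Z hZ => hlt Z (subsetP (subsetDl _ _) Z (subsetP (subsetDl _ _) Z hZ))).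
  rewrite hc2 in b2; exact: arO3 e e' b2 eX (hlt Y hY) cnt.
Qed.
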